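(* In the resource theory of unital maps on a $d$-dimensional Hilbert space, with the currency $\mathcal C=\{C^k\}_{k=1}^d\cup\{\Omega\}$, $C^k=\{\Pi^k/k\}$, $\mathrm{Val}(C^k)=\log d-\log k$, $\mathrm{Val}(\Omega)=0$, the cost of any specification $V\in S^\Omega$ is $$\mathrm{Cost}(V)=\inf_{\rho\in V}\log\frac{d}{\lfloor\lambda_{\max}(\rho)^{-1}\rfloor}=\log d-\sup_{\rho\in V}\log\big\lfloor 2^{H_{\min}(\rho)}\big\rfloor.$$
   Context: $\Omega$ is the set of all density operators on a Hilbert space $\mathcal H$ of dimension $d$ with fixed orthonormal basis $\{\ket i\}_{i=1}^d$; $S^\Omega$ is the set of non-empty subsets of $\Omega$; $\Pi^k=\sum_{i=1}^k\ket i\bra i$. Allowed transformations: $f_{\mathcal E}(V)=\{\mathcal E(\rho):\rho\in V\}$ for unital CPTP maps $\mathcal E$; $V\to W$ iff some unital CPTP $\mathcal E$ has $\mathcal E(\rho)\in W$ for all $\rho\in V$. $\mathrm{Cost}(V)=\inf\{\mathrm{Val}(C):C\in\mathcal C,\ C\to V\}$. $\lambda_{\max}(\rho)$ is the largest eigenvalue of $\rho$, $H_{\min}(\rho)=-\log\lambda_{\max}(\rho)$, $\lfloor\cdot\rfloor$ is the floor function, and logarithms are base 2. *)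

(* Defs.v *)
From HB Require Import structures.
From mathcomp Require Import all_boot all_order all_algebra.
From Stdlib Require Import Reals ClassicalEpsilon.
Set Implicit Arguments. Unset Strict Implicit. Unset Printing Implicit Defensive.
Import Order.TTheory GRing.Theory Num.Theory.

Definition int_to_R (z : int) : R :=
  match z with Posz n => INR n | Negz n => Ropp (INR n.+1) end.

Definition rat_to_R (q : rat) : R := Rdiv (int_to_R (numq q)) (int_to_R (denq q)).

Definition log2 (x : R) : R := Rdiv (ln x) (ln 2).

(* real floor function: Int_part x = up x - 1 is the floor of x *)
Definition Rfloor (x : R) : R := IZR (Int_part x).

Definition is_lower_bound (S : R -> Prop) (m : R) : Prop := forall x, S x -> Rle m x.
Definition is_glb (S : R -> Prop) (m : R) : Prop :=
  is_lower_bound S m /\ (forall b, is_lower_bound S b -> Rle b m).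
Definition Rinf (S : R -> Prop) : R := epsilon (inhabits R0) (fun m => is_glb S m).
Definition Rsup (S : R -> Prop) : R := epsilon (inhabits R0) (fun m => is_lub S m).

Local Open Scope ring_scope.

Section Quantum.
Variable C : archiClosedFieldType.

(* real number represented by a (real) element x of C, via the Dedekind cut of rationals *)
Definition toR (x : C) : R := Rsup (fun r => exists q : rat, ratr q <= x /\ r = rat_to_R q).

Definition psdf (I : finType) (X : I -> I -> C) : Prop :=
  forall v : I -> C, 0 <= \sum_(i : I) \sum_(j : I) (v i)^* * X i j * v j.

Definition psd (d : nat) (A : 'M[C]_d) : Prop := psdf (fun i j => A i j).

Definition density (d : nat) (rho : 'M[C]_d) : Prop := psd rho /\ \tr rho = 1.

(* id_n (x) E applied to an operator on C^n (x) C^d *)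
Definition ampl (n d : nat) (E : 'M[C]_d -> 'M[C]_d)
    (X : 'I_n * 'I_d -> 'I_n * 'I_d -> C) : 'I_n * 'I_d -> 'I_n * 'I_d -> C :=
  fun p q => E (\matrix_(a, b) X (p.1, a) (q.1, b)) p.2 q.2.

Definition completely_positive (d : nat) (E : 'M[C]_d -> 'M[C]_d) : Prop :=
  forall (n : nat) (X : 'I_n * 'I_d -> 'I_n * 'I_d -> C), psdf X -> psdf (ampl E X).

Definition trace_preserving (d : nat) (E : 'M[C]_d -> 'M[C]_d) : Prop :=
  forall A : 'M[C]_d, \tr (E A) = \tr A.

Definition unital (d : nat) (E : 'M[C]_d -> 'M[C]_d) : Prop := E 1%:M = 1%:M.

Definition is_linear_map (d : nat) (E : 'M[C]_d -> 'M[C]_d) : Prop :=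
  forall (a : C) (A B : 'M[C]_d), E (a *: A + B) = a *: E A + E B.

Definition unital_CPTP (d : nat) (E : 'M[C]_d -> 'M[C]_d) : Prop :=
  is_linear_map E /\ completely_positive E /\ trace_preserving E /\ unital E.

Definition convertible (d : nat) (V W : 'M[C]_d -> Prop) : Prop :=
  exists E, unital_CPTP E /\ forall rho, V rho -> W (E rho).

Definition specification (d : nat) (V : 'M[C]_d -> Prop) : Prop :=
  (forall rho, V rho -> density rho) /\ exists rho, V rho.

(* Pi^k = sum_{i=1}^k |i><i|  (0-based indices i < k) *)
Definition Pi (d k : nat) : 'M[C]_d := \matrix_(i, j) ((i == j) && ltn i k)%:R.

(* the currency: Some i stands for C^(i+1) = {Pi^(i+1)/(i+1)}, None stands for Omega *)
Definition currency_set (d : nat) (c : option 'I_d) : 'M[C]_d -> Prop :=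
  match c with
  | Some i => fun rho => rho = (i.+1%:R)^-1 *: Pi d i.+1
  | None => fun rho => density rho
  end.

Definition Val (d : nat) (c : option 'I_d) : R :=
  match c with
  | Some i => Rminus (log2 (INR d)) (log2 (INR i.+1))
  | None => R0
  end.

Definition Cost (d : nat) (V : 'M[C]_d -> Prop) : R :=
  Rinf (fun r => exists c : option 'I_d, convertible (currency_set c) V /\ r = Val c).

Definition is_lambda_max (d : nat) (rho : 'M[C]_d) (l : C) : Prop :=
  eigenvalue rho l /\ forall a, eigenvalue rho a -> a <= l.
Definition lambda_max (d : nat) (rho : 'M[C]_d) : C :=
  epsilon (inhabits 0) (is_lambda_max rho).

Definition Hmin (d : nat) (rho : 'M[C]_d) : R := Ropp (log2 (toR (lambda_max rho))).

End Quantum.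

(* Main.v *)
Require Import Defs.
From HB Require Import structures.
From mathcomp Require Import all_boot all_order all_algebra.
From Stdlib Require Import Reals.
From Stdlib Require Import ClassicalEpsilon Lia Lra.
From mathcomp Require Import ring.
From mathcomp Require Import Rstruct.
From mathcomp Require Import zify.
Set Implicit Arguments. Unset Strict Implicit. Unset Printing Implicit Defensive.
Import Order.TTheory GRing.Theory Num.Theory.

Section Mat.
Local Open Scope ring_scope.
Local Open Scope sesquilinear_scope.
Variable C : archiClosedFieldType.
Variable d : nat.
Implicit Types A B : 'M[C]_d.

Definition qf A (u v : 'cV[C]_d) : C := (u^t* *m A *m v) 0 0.

Lemma qf_sum A u v : qf A u v = \sum_i \sum_j (u i 0)^* * A i j * v j 0.
Proof.
rewrite /qf mxE. under eq_bigr => j _ do rewrite mxE mulr_suml.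
rewrite exchange_big /=. apply eq_bigr => i _; apply eq_bigr => j _.
by rewrite !mxE.
Qed.

Lemma psdP A : psd A <-> forall v : 'cV_d, 0 <= qf A v v.
Proof.
split.
  move=> H v; rewrite qf_sum; exact: (H (fun i => v i 0)).
move=> H f; have := H (\col_i f i); rewrite qf_sum.
by under eq_bigr => i _ do under eq_bigr => j _ do rewrite !mxE.
Qed.

Lemma qfDl A u1 u2 v : qf A (u1 + u2) v = qf A u1 v + qf A u2 v.
Proof. by rewrite /qf linearD /= map_mxD !mulmxDl mxE. Qed.
Lemma qfDr A u v1 v2 : qf A u (v1 + v2) = qf A u v1 + qf A u v2.
Proof. by rewrite /qf mulmxDr mxE. Qed.
Lemma qfZl A a u v : qf A (a *: u) v = a^* * qf A u v.
Proof. by rewrite /qf linearZ /= map_mxZ -!scalemxAl mxE. Qed.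
Lemma qfZr A a u v : qf A u (a *: v) = a * qf A u v.
Proof. by rewrite /qf -scalemxAr mxE. Qed.

Lemma sum_delta (I : finType) (F : I -> C) x :
  \sum_i (i == x)%:R * F i = F x.
Proof.
rewrite (bigD1 x) //= eqxx mul1r big1 ?addr0 // => i /negbTE ->.
by rewrite mul0r.
Qed.

Lemma sum_delta' (I : finType) (F : I -> C) x :
  \sum_i F i * (i == x)%:R = F x.
Proof.
under eq_bigr => i _ do rewrite mulrC. exact: sum_delta.
Qed.

Lemma qf_e A i j : qf A (delta_mx i 0) (delta_mx j 0) = A i j.
Proof.
rewrite qf_sum (bigD1 i) //= [X in _ + X]big1 ?addr0; last first.
  move=> k /negbTE kn; apply: big1 => l _; rewrite !mxE kn /= conjC0.
  by rewrite !mul0r.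
rewrite (bigD1 j) //= [X in _ + X]big1 ?addr0; last first.
  by move=> k /negbTE kn; rewrite !mxE kn /= mulr0.
by rewrite !mxE !eqxx /= conjC1 mul1r mulr1.
Qed.

Lemma psd_herm A : psd A -> forall i j, A j i = (A i j)^*.
Proof.
move=> /psdP H i j.
have R u : (qf A u u)^* = qf A u u by apply/conj_Creal/ger0_real/H.
set ei : 'cV[C]_d := delta_mx i 0; set ej : 'cV[C]_d := delta_mx j 0.
have E t : qf A (ei + t *: ej) (ei + t *: ej) =
   A i i + t * A i j + t^* * A j i + t^* * t * A j j.
  rewrite !qfDl !qfDr !qfZl !qfZr !qf_e; ring.
have Ri := R ei; have Rj := R ej; rewrite qf_e in Ri; rewrite qf_e in Rj.
have E1 := R (ei + 1 *: ej); rewrite E !rmorphD !rmorphM /= !conjC1 in E1.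
have E2 := R (ei + 'i *: ej); rewrite E !rmorphD !rmorphM /= !conjCK conjCi in E2.
rewrite Ri Rj in E1 E2.
move: E1 E2; generalize (A i j) (A j i) (A i i) (A j j) => b c a e E1 E2.
have e1 : b^* + c^* - (b + c) = 0.
  have -> : b^* + c^* - (b + c) = (a + 1 * b^* + 1 * c^* + 1 * 1 * e) - (a + 1 * b + 1 * c + 1 * 1 * e) by ring.
  by rewrite E1 subrr.
have e2 : 'i * (c^* - b^* - (b - c)) = 0.
  have -> : 'i * (c^* - b^* - (b - c)) =
    (a + - 'i * b^* + 'i * c^* + 'i * - 'i * e) -
    (a + 'i * b + - 'i * c + - 'i * 'i * e) by ring.
  by rewrite E2 subrr.
move/eqP: e2; rewrite mulf_eq0 (negbTE (neq0Ci C)) /= => /eqP e2.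
have : c^* + c^* = b + b.
  apply/eqP; rewrite -subr_eq0; apply/eqP.
  have -> : c^* + c^* - (b + b) = (b^* + c^* - (b + c)) + (c^* - b^* - (b - c)) by ring.
  by rewrite e1 e2 addr0.
move=> h; have : c^* = b.
  have two : (2 : C) != 0 by rewrite pnatr_eq0.
  have -> : c^* = (c^* + c^*) / 2 by field.
  by rewrite h; field.
by move=> <-; rewrite conjCK.
Qed.


Lemma ctM m n p (X : 'M[C]_(m, n)) (Y : 'M[C]_(n, p)) : (X *m Y)^t* = Y^t* *m X^t*.
Proof. by rewrite trmx_mul map_mxM. Qed.

Lemma qf_cong A (M : 'M[C]_d) u : qf (M *m A *m M^t*) u u = qf A (M^t* *m u) (M^t* *m u).
Proof. by rewrite /qf ctM trmxCK !mulmxA. Qed.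

Lemma psd_cong A (M : 'M[C]_d) : psd A -> psd (M *m A *m M^t*).
Proof. by move=> /psdP H; apply/psdP => v; rewrite qf_cong. Qed.

Lemma psd_hermsym A : psd A -> A \is hermsymmx.
Proof.
move=> H; apply/is_hermitianmxP; rewrite expr0 scale1r.
by apply/matrixP => i j; rewrite !mxE (psd_herm H j i).
Qed.

Lemma diag_entry (s : 'rV[C]_d) l : diag_mx s l l = s 0 l.
Proof. by rewrite mxE eqxx mulr1n. Qed.

Lemma psd_diag_ge0 (s : 'rV[C]_d) l : psd (diag_mx s) -> 0 <= s 0 l.
Proof. by move=> /psdP /(_ (delta_mx l 0)); rewrite qf_e diag_entry. Qed.

Lemma qf_diag (s : 'rV[C]_d) v : qf (diag_mx s) v v = \sum_l s 0 l * (v l 0 * (v l 0)^*).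
Proof.
rewrite qf_sum; apply eq_bigr => i _.
rewrite (bigD1 i) //= [X in _ + X]big1 ?addr0; last first.
  by move=> k /negbTE kn; rewrite mxE eq_sym kn mulr0n mulr0 mul0r.
by rewrite diag_entry; ring.
Qed.

Lemma psd_diag (s : 'rV[C]_d) : (forall l, 0 <= s 0 l) -> psd (diag_mx s).
Proof.
move=> H; apply/psdP => v; rewrite qf_diag; apply: sumr_ge0 => l _.
by apply: mulr_ge0 => //; apply: mul_conjC_ge0.
Qed.

Lemma exists_max (f : 'I_d -> C) : (0 < d)%nat -> (forall l, f l \is Num.real) ->
  exists j, forall l, f l <= f j.
Proof.
move=> Hd Hr.
suff: forall sq : seq 'I_d, exists j, forall l, l \in sq -> f l <= f j.
  by move=> /(_ (enum 'I_d)) [j Hj]; exists j => l; apply: Hj; rewrite mem_enum.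
elim => [|x sq [j Hj]]; first by exists (Ordinal Hd) => l; rewrite in_nil.
case/orP: (real_leVge (Hr x) (Hr j)) => h.
  by exists j => l; rewrite in_cons => /orP[/eqP->|]; [done | exact: Hj].
exists x => l; rewrite in_cons => /orP[/eqP-> //|/Hj hl]; exact: le_trans hl h.
Qed.

Lemma e_neq0 (l : 'I_d) : ('e_l : 'rV[C]_d) != 0.
Proof.
apply/eqP => /matrixP/(_ 0 l); rewrite !mxE !eqxx /= => /eqP.
by rewrite oner_eq0.
Qed.

Lemma eigen_char (U : 'M[C]_d) (s : 'rV[C]_d) a :
  U *m U^t* = 1%:M -> U^t* *m U = 1%:M ->
  eigenvalue (U^t* *m diag_mx s *m U) a <-> exists l, a = s 0 l.
Proof.
move=> UU UtU; split.
  move=> /eigenvalueP [v Hv vn0].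
  set w := v *m U^t*.
  have Hw : w *m diag_mx s = a *: w.
    have : v *m (U^t* *m diag_mx s *m U) *m U^t* = a *: v *m U^t* by rewrite Hv.
    by rewrite -scalemxAl !mulmxA -[_ *m U *m U^t*]mulmxA UU mulmx1.
  have wn0 : w != 0.
    apply/eqP => w0; move/eqP: vn0; apply.
    by rewrite -[v]mulmx1 -UtU mulmxA -/w w0 mul0mx.
  clearbody w.
  case: (pickP (fun l => w 0 l != 0)) => [l wl | H]; last first.
    move/negP: wn0; case; apply/eqP/matrixP => i l; rewrite ord1 [RHS]mxE.
    by have := H l => /= /negbFE/eqP.
  exists l; move/matrixP: Hw => /(_ 0 l); rewrite mul_mx_diag !mxE => e.
  by apply: (mulIf wl); rewrite -e mulrC.
move=> [l ->]; apply/eigenvalueP; exists ('e_l *m U).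
  rewrite !mulmxA -[_ *m U *m U^t*]mulmxA UU mulmx1.
  by rewrite scalemxAl -row_diag_mx rowE.
apply/eqP => h; move: (e_neq0 l); rewrite -[X in X != 0]mulmx1 -UU mulmxA h mul0mx.
by rewrite eqxx.
Qed.

Lemma density_spec (rho : 'M[C]_d) : (0 < d)%nat -> density rho ->
 exists (U : 'M[C]_d) (s : 'rV[C]_d) (j : 'I_d),
  [/\ U *m U^t* = 1%:M, U^t* *m U = 1%:M, rho = U^t* *m diag_mx s *m U,
      (forall l, 0 <= s 0 l) &
      (\sum_l s 0 l = 1 /\ lambda_max rho = s 0 j /\ forall l, s 0 l <= s 0 j)].
Proof.
move=> Hd [Hpsd Htr].
have herm := psd_hermsym Hpsd.
set U := spectralmx rho; set s := spectral_diag rho.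
have Uu : U \is unitarymx by apply: spectral_unitarymx.
have UU : U *m U^t* = 1%:M by apply/unitarymxP.
have UtU : U^t* *m U = 1%:M by rewrite -invmx_unitary // mulVmx // unitarymx_unit.
have Erho : rho = U^t* *m diag_mx s *m U.
  have /orthomx_spectralP E := hermitian_normalmx herm.
  by rewrite -invmx_unitary //; exact: E.
have sreal : forall l, s 0 l \is Num.real.
  by move=> l; have /mxOverP := hermitian_spectral_diag_real herm; apply.
have sge0 : forall l, 0 <= s 0 l.
  move=> l; apply: psd_diag_ge0.
  have -> : diag_mx s = U *m rho *m U^t*.
    by rewrite Erho !mulmxA UU mul1mx -mulmxA UU mulmx1.
  exact: psd_cong.
have ssum : \sum_l s 0 l = 1.
  rewrite -Htr Erho mxtrace_mulC mulmxA UU mul1mx mxtrace_diag.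
  by [].
have [j Hj] := exists_max Hd sreal.
exists U, s, j; split => //; split => //; split => //.
have Hl : is_lambda_max rho (s 0 j).
  split; first by rewrite Erho; apply/(eigen_char _ _ UU UtU); exists j.
  by move=> a; rewrite Erho => /(eigen_char _ _ UU UtU) [l ->].
have : is_lambda_max rho (lambda_max rho).
  exact: (epsilon_spec (inhabits 0) (is_lambda_max rho) (ex_intro _ _ Hl)).
move=> [e1 m1]; apply: le_anti; apply/andP; split; last exact: m1 (proj1 Hl).
by move: e1; rewrite Erho => /(eigen_char _ _ UU UtU) [l ->].
Qed.


Lemma sum_pair (R : zmodType) (I J : finType) (F : I * J -> R) :
  \sum_p F p = \sum_i \sum_j F (i, j).
Proof. by rewrite pair_bigA; apply: eq_bigr => -[]. Qed.

Lemma psdf_ext (I : finType) (F G : I -> I -> C) :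
  (forall p q, F p q = G p q) -> psdf G -> psdf F.
Proof.
move=> e H v; have := H v.
by under eq_bigr => i _ do under eq_bigr => j _ do rewrite -e.
Qed.

Lemma cong_psdf (I J : finType) (X : I -> I -> C) (K : J -> I -> C) :
  psdf X -> psdf (fun j j' => \sum_i \sum_i' K j i * X i i' * (K j' i')^*).
Proof.
move=> HX v; pose w i := \sum_j (K j i)^* * v j.
have := HX w; congr (_ <= _).
rewrite /w.
under eq_bigr => i _ do under eq_bigr => i' _ do
  rewrite rmorph_sum /= mulr_suml mulr_sumr.
cbv beta.
under [RHS]eq_bigr => j _ do under eq_bigr => j' _ do
  rewrite mulr_sumr mulr_suml.
under eq_bigr => i _ do under eq_bigr => i' _ do under eq_bigr => j' _ do
  rewrite mulr_suml.
under [RHS]eq_bigr => j _ do under eq_bigr => j' _ do under eq_bigr => i _ do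
  rewrite mulr_sumr mulr_suml.
under eq_bigr => i _ do under eq_bigr => i' _ do rewrite exchange_big.
under eq_bigr => i _ do rewrite exchange_big.
rewrite exchange_big.
under eq_bigr => j _ do under eq_bigr => i _ do rewrite exchange_big.
under eq_bigr => j _ do rewrite exchange_big.
apply: eq_bigr => j _; apply: eq_bigr => j' _; apply: eq_bigr => i _;
  apply: eq_bigr => i' _.
rewrite !rmorphM /= conjCK; ring.
Qed.


Lemma sum_only (I : finType) (F : I -> C) x :
  (forall i, i != x -> F i = 0) -> \sum_i F i = F x.
Proof. by move=> H; rewrite (bigD1 x) //= big1 ?addr0. Qed.

Lemma cp_kraus (K : 'M[C]_d) : completely_positive (fun X => K *m X *m K^t*).
Proof.
move=> n Y HY.
pose Kt (p : 'I_n * 'I_d) (a : 'I_n * 'I_d) := (a.1 == p.1)%:R * K p.2 a.2.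
apply: (psdf_ext _ (cong_psdf Kt HY)) => p q.
have inner : forall a, \sum_b Y a b * (Kt q b)^* =
    \sum_b2 Y a (q.1, b2) * (K q.2 b2)^*.
  move=> a; rewrite sum_pair (sum_only (x := q.1)).
    by apply: eq_bigr => b2 _; rewrite /Kt /= eqxx mul1r.
  move=> b1 h; apply: big1 => b2 _.
  by rewrite /Kt /= (negbTE h) mul0r conjC0 mulr0.
under [RHS]eq_bigr => a _ do rewrite -(eq_bigr _ (fun b _ => mulrA _ _ _)) -mulr_sumr inner.
rewrite sum_pair (sum_only (x := p.1)); last first.
  move=> a1 h; apply: big1 => a2 _.
  by rewrite /Kt /= (negbTE h) !mul0r.
rewrite /ampl !mxE /Kt /= eqxx.
under eq_bigr => b _ do rewrite !mxE mulr_suml.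
rewrite exchange_big /=; apply: eq_bigr => a _.
rewrite mul1r mulr_sumr; apply: eq_bigr => b _.
by rewrite !mxE; ring.
Qed.

Lemma cp_sum (I : finType) (w : I -> C) (F : I -> 'M[C]_d -> 'M[C]_d) :
  (forall i, 0 <= w i) -> (forall i, completely_positive (F i)) ->
  completely_positive (fun X => \sum_i w i *: F i X).
Proof.
move=> w0 HF n Y HY v.
have : 0 <= \sum_i w i * (\sum_p \sum_q (v p)^* * ampl (F i) Y p q * v q).
  by apply: sumr_ge0 => i _; apply: mulr_ge0 => //; apply: HF.
congr (_ <= _).
under eq_bigr => i _ do rewrite mulr_sumr.
rewrite exchange_big; apply: eq_bigr => p _.
under eq_bigr => i _ do rewrite mulr_sumr.
rewrite exchange_big; apply: eq_bigr => q _.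
rewrite /ampl summxE mulr_sumr mulr_suml; apply: eq_bigr => i _.
by rewrite mxE; ring.
Qed.

Lemma cp_pos (E : 'M[C]_d -> 'M[C]_d) : completely_positive E ->
  forall A, psd A -> psd (E A).
Proof.
move=> cp A HA.
pose X : 'I_1 * 'I_d -> 'I_1 * 'I_d -> C := fun p q => A p.2 q.2.
have HX : psdf X.
  move=> v; have := HA (fun i => v (ord0, i)); congr (_ <= _).
  rewrite sum_pair big_ord1; apply: eq_bigr => i _.
  by rewrite sum_pair big_ord1.
have := cp 1 X HX => H f; have := H (fun p => f p.2); congr (_ <= _).
rewrite sum_pair big_ord1; apply: eq_bigr => i _.
rewrite sum_pair big_ord1; apply: eq_bigr => j _.
rewrite /ampl /X /=; congr (_ * _ * _); congr (E _ _ _).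
by apply/matrixP => a b; rewrite mxE.
Qed.


Lemma delta_mid (X : 'M[C]_d) (i l : 'I_d) :
  delta_mx l i *m X *m delta_mx i l = X i i *: delta_mx l l.
Proof.
rewrite -(mul_delta_mx (R:=C) (0 : 'I_1) l i) -(mul_delta_mx (R:=C) (0 : 'I_1) i l).
set a : 'M[C]_(d, 1) := delta_mx l 0; set b : 'M[C]_(1, d) := delta_mx 0 i.
set e : 'M[C]_(d, 1) := delta_mx i 0; set f : 'M[C]_(1, d) := delta_mx 0 l.
have -> : a *m b *m X *m (e *m f) = a *m (b *m X *m e) *m f by rewrite !mulmxA.
rewrite /a /b /e /f.
have -> : (delta_mx 0 i : 'M[C]_(1, d)) *m X *m (delta_mx i 0 : 'M[C]_(d, 1)) = (X i i)%:M.
  by rewrite [LHS]mx11_scalar -rowE -colE !mxE.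
by rewrite mul_mx_scalar -scalemxAl mul_delta_mx.
Qed.

Lemma ct_delta (i j : 'I_d) : (delta_mx i j : 'M[C]_d)^t* = delta_mx j i.
Proof. by apply/matrixP => a b; rewrite !mxE conjC_nat andbC. Qed.

Variable U : 'M[C]_d.
Variable c : 'I_d -> 'I_d -> C.
Definition Kr (p : 'I_d * 'I_d) : 'M[C]_d := U^t* *m delta_mx p.2 p.1.
Definition Emap (X : 'M[C]_d) : 'M[C]_d := \sum_p c p.1 p.2 *: (Kr p *m X *m (Kr p)^t*).

Lemma Emap_diag X : Emap X = U^t* *m diag_mx (\row_l \sum_i c i l * X i i) *m U.
Proof.
rewrite /Emap diag_mx_sum_delta.
have -> : \sum_(l < d) (\row_l \sum_i c i l * X i i) 0 l *: delta_mx l l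
   = \sum_p (c p.1 p.2 * X p.1 p.1) *: delta_mx p.2 p.2.
  rewrite sum_pair exchange_big /=; apply: eq_bigr => l _.
  by rewrite mxE scaler_suml.
rewrite mulmx_sumr mulmx_suml; apply: eq_bigr => p _.
rewrite -scalerA -delta_mid -scalemxAr -scalemxAl /Kr ctM trmxCK ct_delta.
by rewrite !mulmxA.
Qed.

Lemma Emap_linear : is_linear_map Emap.
Proof.
move=> a A B; rewrite !Emap_diag.
have -> : (\row_l \sum_i c i l * (a *: A + B) i i) =
    a *: (\row_l \sum_i c i l * A i i) + (\row_l \sum_i c i l * B i i).
  apply/rowP => l; rewrite !mxE mulr_sumr -big_split /=; apply: eq_bigr => i _.
  by rewrite !mxE; ring.
by rewrite linearD linearZ /= mulmxDr mulmxDl -scalemxAr -scalemxAl.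
Qed.

Lemma Emap_cp : (forall i l, 0 <= c i l) -> completely_positive Emap.
Proof.
move=> c0; apply: (cp_sum (w := fun p => c p.1 p.2) (F := fun p X => Kr p *m X *m (Kr p)^t*)).
  by move=> p; apply: c0.
by move=> p; apply: cp_kraus.
Qed.

Hypothesis UU : U *m U^t* = 1%:M.
Hypothesis UtU : U^t* *m U = 1%:M.

Lemma Emap_tp : (forall i, \sum_l c i l = 1) -> trace_preserving Emap.
Proof.
move=> H A; rewrite Emap_diag mxtrace_mulC mulmxA UU mul1mx mxtrace_diag.
under eq_bigr => l _ do rewrite mxE.
rewrite exchange_big /=; apply: eq_bigr => i _.
by rewrite -mulr_suml H mul1r.
Qed.

Lemma Emap_unital : (forall l, \sum_i c i l = 1) -> unital Emap.
Proof.
move=> H; rewrite /unital Emap_diag.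
have -> : (\row_l \sum_i c i l * (1%:M : 'M[C]_d) i i) = const_mx 1.
  apply/rowP => l; rewrite !mxE; rewrite -[RHS](H l); apply: eq_bigr => i _.
  by rewrite mxE eqxx mulr1.
by rewrite diag_const_mx mulmx1 UtU.
Qed.

End Mat.

Section Mat2.
Local Open Scope ring_scope.
Local Open Scope sesquilinear_scope.
Variable C : archiClosedFieldType.
Variable d : nat.

Lemma Pi_scale (a : C) k : a *: Pi C d k = diag_mx (\row_(i < d) (a * ((i < k)%nat)%:R)).
Proof.
apply/matrixP => i j; rewrite !mxE; case: (eqVneq i j) => [->|h].
  by rewrite /= mulr1n.
by rewrite /= mulr0n mulr0.
Qed.

Lemma sum_ltn k : (k <= d)%nat -> \sum_(i < d) ((i < k)%nat)%:R = k%:R :> C.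
Proof.
move=> kd; rewrite -(big_mkord xpredT (fun i => ((i < k)%nat)%:R)).
rewrite (@big_cat_nat _ _ _ k 0 d) //=.
rewrite (@eq_big_nat _ _ _ 0 k _ (fun _ => 1)); last first.
  by move=> i /andP [_ ->].
rewrite (@eq_big_nat _ _ _ k d _ (fun _ => 0)); last first.
  by move=> i /andP [h _]; rewrite ltnNge h.
by rewrite !sumr_const_nat mul0rn addr0 subn0.
Qed.

Lemma density_Pi k : (0 < k)%nat -> (k <= d)%nat -> density (k%:R^-1 *: Pi C d k).
Proof.
move=> k0 kd; rewrite Pi_scale; split.
  apply: psd_diag => l; rewrite mxE; apply: mulr_ge0; last exact: ler0n.
  by rewrite invr_ge0 ler0n.
rewrite mxtrace_diag; under eq_bigr => i _ do rewrite mxE.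
by rewrite -mulr_sumr sum_ltn // mulVf // pnatr_eq0 -lt0n.
Qed.

Lemma lam_bounds (rho : 'M[C]_d) : (0 < d)%nat -> density rho ->
  d%:R^-1 <= lambda_max rho /\ lambda_max rho <= 1.
Proof.
move=> Hd Hr; have [U [s [j [UU UtU Er sge0 [ssum [lam smax]]]]]] := density_spec Hd Hr.
rewrite lam; split; last first.
  rewrite -ssum (bigD1 j) //= lerDl; exact: sumr_ge0.
have h1 : 1 <= d%:R * s 0 j.
  have -> : d%:R * s 0 j = \sum_(l < d) s 0 j by rewrite sumr_const card_ord mulr_natl.
  rewrite -ssum; apply: ler_sum => l _; exact: smax.
have dn0 : (d%:R : C) != 0 by rewrite pnatr_eq0 -lt0n.
rewrite -[s 0 j](mulKf dn0) -[X in X <= _]mulr1; apply: ler_wpM2l => //.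
by rewrite invr_ge0 ler0n.
Qed.

Lemma lin_facts (E : 'M[C]_d -> 'M[C]_d) : is_linear_map E ->
  (forall a A, E (a *: A) = a *: E A) /\ (forall A B, E (A - B) = E A - E B).
Proof.
move=> lin.
have E0 : E 0 = 0.
  have h := lin 1 0 0; rewrite !scale1r addr0 in h.
  have : E 0 + E 0 - E 0 = E 0 - E 0 by rewrite -h.
  by rewrite addrK subrr.
have EZ : forall a A, E (a *: A) = a *: E A.
  by move=> a A; have := lin a A 0; rewrite !addr0 E0 addr0.
split => // A B.
by have := lin (-1) B A; rewrite !scaleN1r addrC => ->; rewrite addrC.
Qed.

Lemma partA (E : 'M[C]_d -> 'M[C]_d) k : (0 < d)%nat -> unital_CPTP E ->
  (0 < k)%nat -> (k <= d)%nat ->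
  density (E (k%:R^-1 *: Pi C d k)) /\ lambda_max (E (k%:R^-1 *: Pi C d k)) <= k%:R^-1.
Proof.
move=> Hd [lin [cp [tp un]]] k0 kd.
have [EZ EB] := lin_facts lin.
have HP := density_Pi k0 kd.
have Hrho : density (E (k%:R^-1 *: Pi C d k)).
  split; first by apply: cp_pos => //; case: HP.
  by rewrite tp; case: HP.
split => //.
have [U [s [j [UU UtU Er sge0 [ssum [lam smax]]]]]] := density_spec Hd Hrho.
have ev : eigenvalue (E (k%:R^-1 *: Pi C d k)) (s 0 j).
  by rewrite Er; apply/(eigen_char _ _ UU UtU); exists j.
rewrite lam; move/eigenvalueP: ev => [v Hv vn0].
have Hpsd : psd (k%:R^-1 *: 1%:M - E (k%:R^-1 *: Pi C d k)).
  have -> : k%:R^-1 *: 1%:M - E (k%:R^-1 *: Pi C d k) =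
            E (k%:R^-1 *: 1%:M - k%:R^-1 *: Pi C d k).
    by rewrite EB (EZ _ 1%:M) un.
  apply: cp_pos => //.
  have -> : k%:R^-1 *: 1%:M - k%:R^-1 *: Pi C d k =
      diag_mx (\row_(i < d) (k%:R^-1 * (1 - ((i < k)%nat)%:R))) :> 'M[C]_d.
    apply/matrixP => a b; rewrite !mxE; case: (eqVneq a b) => [->|h].
      by rewrite /= !mulr1n mulrBr mulr1.
    by rewrite /= !mulr0n mulr0 subr0.
  apply: psd_diag => l; rewrite mxE; apply: mulr_ge0.
    by rewrite invr_ge0 ler0n.
  by case: (l < k)%nat; rewrite /= ?subrr ?subr0.
have := (psdP _).1 Hpsd (v^t*); rewrite /qf trmxCK.
rewrite mulmxBr -scalemxAr mulmx1 Hv -scalerBl -scalemxAl mxE.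
have pos : 0 < (v *m v^t*) 0 0 by rewrite -dotmxE dotmx_is_dotmx.
by rewrite pmulr_lge0 // subr_ge0.
Qed.


Lemma partB (rho : 'M[C]_d) k : (0 < d)%nat -> density rho ->
  (0 < k)%nat -> (k <= d)%nat -> lambda_max rho <= k%:R^-1 ->
  exists E, unital_CPTP E /\ E (k%:R^-1 *: Pi C d k) = rho.
Proof.
move=> Hd Hr k0 kd Hlam.
have [U [s [j [UU UtU Er sge0 [ssum [lam smax]]]]]] := density_spec Hd Hr.
have kn0 : (k%:R : C) != 0 by rewrite pnatr_eq0 -lt0n.
have ks1 : forall l, k%:R * s 0 l <= 1.
  move=> l; rewrite -[X in _ <= X](mulfV kn0); apply: ler_wpM2l; first exact: ler0n.
  by apply: le_trans (smax l) _; rewrite -lam.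
pose t l := (1 - k%:R * s 0 l) / (d - k)%:R.
pose c (i l : 'I_d) := if (i < k)%nat then s 0 l else t l.
have ce : forall i l, c i l = ((i < k)%nat)%:R * s 0 l + (1 - ((i < k)%nat)%:R) * t l.
  by move=> i l; rewrite /c; case: (i < k)%nat; rewrite /= ?subrr ?subr0; ring.
exists (Emap U c); split; last first.
  rewrite Emap_diag Er; congr (_ *m diag_mx _ *m _); apply/rowP => l; rewrite mxE.
  have -> : \sum_i c i l * (k%:R^-1 *: Pi C d k) i i =
            \sum_(i < d) ((i < k)%nat)%:R * (s 0 l * k%:R^-1).
    apply: eq_bigr => i _; rewrite !mxE eqxx /= /c.
    by case: (i < k)%nat; rewrite /= ?mulr1n ?mulr0n; ring.
  by rewrite -mulr_suml sum_ltn // mulrCA mulfV // mulr1.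
split; first exact: Emap_linear.
split.
  apply: Emap_cp => i l; rewrite /c; case: (i < k)%nat => //.
  rewrite /t; apply: divr_ge0; last exact: ler0n.
  by rewrite subr_ge0.
split.
  apply: (Emap_tp UU) => i; rewrite /c; case ik: (i < k)%nat; first exact: ssum.
  have kd' : (k < d)%nat by apply: (leq_ltn_trans _ (ltn_ord i)); rewrite leqNgt ik.
  have dkn0 : ((d - k)%:R : C) != 0 by rewrite pnatr_eq0 subn_eq0 -ltnNge.
  rewrite /t -mulr_suml sumrB -mulr_sumr ssum sumr_const card_ord mulr1.
  by rewrite natrB ?(ltnW kd') // mulfV //; rewrite -natrB ?(ltnW kd').
apply: (Emap_unital UtU) => l.
under eq_bigr => i _ do rewrite ce.
rewrite big_split /= -!mulr_suml sumrB sum_ltn // sumr_const card_ord.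
case: (ltngtP k d) => [kd'|kd''|kd'].
- have dkn0 : ((d - k)%:R : C) != 0 by rewrite pnatr_eq0 subn_eq0 -ltnNge.
  rewrite /t natrB ?(ltnW kd') // -natrB ?(ltnW kd') //.
  by rewrite mulrCA mulfV // mulr1 addrC subrK.
- by move: kd''; rewrite ltnNge kd.
- have dk0 : (d%:R : C) = k%:R by rewrite kd'.
  rewrite ?natrB ?dk0 ?subrr ?subnn ?mul0r ?addr0.
  have H0 : forall l, 0 <= k%:R^-1 - s 0 l.
    by move=> l'; rewrite subr_ge0 (le_trans (smax l')) // -lam.
  have : \sum_(l' < d) (k%:R^-1 - s 0 l') == 0.
    rewrite sumrB ssum sumr_const card_ord -[_ *+ d]mulr_natr dk0 mulVf //.
    by rewrite subrr.
  move/eqP/(psumr_eq0P (fun l' _ => H0 l')) => /(_ l isT) /eqP.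
  by rewrite subr_eq0 => /eqP <-; rewrite mulfV.
Qed.

End Mat2.

Section Real.
Local Open Scope ring_scope.
Variable C : archiClosedFieldType.

Lemma int_to_RE z : int_to_R z = z%:~R.
Proof.
case: z => n; rewrite /int_to_R; first by rewrite INRE.
by rewrite INRE NegzE mulrNz.
Qed.

Lemma rat_to_RE q : rat_to_R q = ratr q.
Proof. by rewrite /rat_to_R RdivE !int_to_RE. Qed.

Lemma ratr_invn (F : numFieldType) n : ratr ((n%:R : rat)^-1) = (n%:R : F)^-1.
Proof. by rewrite fmorphV rmorph_nat. Qed.

Definition set_toR (x : C) : R -> Prop :=
  fun r => exists q : rat, ratr q <= x /\ r = rat_to_R q.

Lemma toR_lub (x : C) : x \is Num.real -> is_lub (set_toR x) (toR x).
Proof.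
move=> xr.
have ex : exists m, is_lub (set_toR x) m.
  have bnd : bound (set_toR x).
    exists (ratr ((Num.floor x + 1)%:~R : rat)) => r [q [qx ->]].
    apply/RleP; rewrite rat_to_RE ler_rat.
    rewrite -(ler_rat C) ratr_int; apply: (le_trans qx).
    exact/ltW/real_floorD1_gt.
  have ne : exists r, set_toR x r.
    exists (rat_to_R ((Num.floor x)%:~R)); exists ((Num.floor x)%:~R); split => //.
    by rewrite ratr_int real_floor_le.
  by have [m Hm] := completeness (set_toR x) bnd ne; exists m.
exact: (epsilon_spec (inhabits R0) _ ex).
Qed.

Lemma toR_ge (x : C) q : x \is Num.real -> ratr q <= x -> ratr q <= toR x.
Proof.
move=> xr qx; have [ub _] := toR_lub xr.
by rewrite -rat_to_RE; apply/RleP; apply: ub; exists q.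
Qed.

Lemma toR_le (x : C) q : x \is Num.real -> x <= ratr q -> toR x <= ratr q.
Proof.
move=> xr xq; have [_ lb] := toR_lub xr.
apply/RleP; apply: lb => r [q' [q'x ->]].
apply/RleP; rewrite rat_to_RE ler_rat -(ler_rat C).
exact: le_trans q'x xq.
Qed.

Lemma toR_refl (x : C) q : x \is Num.real -> toR x <= ratr q -> x <= ratr q.
Proof.
move=> xr tq; have qr : ratr q \is @Num.real C by apply: rpred_rat.
case: (real_leP xr qr) => // h; exfalso.
set e := x - ratr q.
have e0 : 0 < e by rewrite subr_gt0.
set n := Num.bound (e^-1).
have hn : e^-1 < n%:R by apply: archi_boundP; rewrite invr_ge0 ltW.
have n0 : 0 < (n%:R : C) by apply: le_lt_trans hn; rewrite invr_ge0 ltW.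
have hn' : n%:R^-1 < e.
  by rewrite -[X in _ < X]invrK ltf_pV2 // ?posrE ?invr_gt0.
have q'x : ratr (q + (n%:R)^-1) <= x.
  rewrite rmorphD /= ratr_invn; apply: ltW.
  by rewrite -ltrBrDl.
have := le_trans (toR_ge xr q'x) tq.
rewrite ler_rat gerDl invr_le0 ?ler0n.
rewrite lern0 => /eqP n00; move: n0; rewrite n00 ltxx.
by [].
Qed.

End Real.

Lemma ln2_pos : Rlt R0 (ln 2%R).
Proof. have := ln_lt_2; lra. Qed.

Lemma log2_le x y : Rlt R0 x -> Rle x y -> Rle (log2 x) (log2 y).
Proof.
move=> x0 xy; rewrite /log2 /Rdiv; apply: Rmult_le_compat_r.
  by apply/Rlt_le/Rinv_0_lt_compat/ln2_pos.
case: (Rle_lt_or_eq_dec _ _ xy) => h; last by rewrite h; apply: Rle_refl.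
by apply/Rlt_le/ln_increasing.
Qed.

Lemma log2_div x y : Rlt R0 x -> Rlt R0 y -> log2 (Rdiv x y) = Rminus (log2 x) (log2 y).
Proof.
move=> x0 y0; rewrite /log2 /Rdiv ln_mult ?ln_Rinv //; last exact: Rinv_0_lt_compat.
by rewrite /Rminus Rmult_plus_distr_r -Ropp_mult_distr_l.
Qed.

Section Final.
Local Open Scope ring_scope.
Variable C : archiClosedFieldType.
Variable d : nat.
Hypothesis Hd : (0 < d)%nat.

Lemma t_facts (rho : 'M[C]_d) : density rho ->
  lambda_max rho \is Num.real /\
  Rle (Rinv (INR d)) (toR (lambda_max rho)) /\ Rle (toR (lambda_max rho)) R1.
Proof.
move=> Hr; have [l1 l2] := lam_bounds Hd Hr.
have lr : lambda_max rho \is Num.real.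
  by apply: ger0_real; apply: le_trans l1; rewrite invr_ge0 ler0n.
split => //; split.
  apply/RleP; rewrite RinvE INRE -(ratr_invn R) toR_ge // ratr_invn //.
have := toR_le (q := 1) lr; rewrite !rmorph1 => h; apply/RleP; exact: h l2.
Qed.

Lemma floor_char (rho : 'M[C]_d) : density rho ->
  exists k : nat, [/\ (0 < k)%nat, (k <= d)%nat,
    Rfloor (Rinv (toR (lambda_max rho))) = INR k,
    lambda_max rho <= k%:R^-1 &
    (forall k' : nat, (0 < k')%nat -> lambda_max rho <= k'%:R^-1 -> (k' <= k)%nat)].
Proof.
move=> Hr; have [lr [t1 t2]] := t_facts Hr.
set t := toR (lambda_max rho) in t1 t2 *.
have dpos : Rlt R0 (INR d) by apply: lt_0_INR; lia.
have tpos : Rlt R0 t by apply: Rlt_le_trans t1; apply: Rinv_0_lt_compat.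
set u := Rinv t.
change R1 with (IZR 1) in t2.
have u1 : Rle (IZR 1) u.
  by have := Rinv_le_contravar _ _ tpos t2; rewrite Rinv_1.
have ud : Rle u (INR d).
  rewrite /u -[INR d]Rinv_inv; apply: Rinv_le_contravar => //.
  exact: Rinv_0_lt_compat.
have [z1 z2] := base_Int_part u.
set z := Int_part u in z1 z2.
have zpos : (1 <= z)%Z.
  have : (0 < z)%Z by apply: lt_IZR; lra.
  lia.
have zd : (z <= Z.of_nat d)%Z by apply: le_IZR; rewrite -INR_IZR_INZ; lra.
exists (Z.to_nat z).
have kz : INR (Z.to_nat z) = IZR z by rewrite INR_IZR_INZ Znat.Z2Nat.id //; lia.
split.
- lia.
- lia.
- by rewrite /Rfloor kz.
- have kp : Rlt R0 (INR (Z.to_nat z)) by rewrite kz; have := IZR_le 1 z zpos; lra.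
  rewrite -(ratr_invn C); apply: toR_refl => //; rewrite ratr_invn -INRE -RinvE.
  apply/RleP; rewrite -/t -[t]Rinv_inv; apply: Rinv_le_contravar => //.
  by rewrite kz.
- move=> k' k0 hk; have h0 := toR_le lr (q := (k'%:R)^-1).
  rewrite ratr_invn in h0; have h1 := h0 hk.
  rewrite (ratr_invn R) in h1.
  have h : Rle t (Rinv (INR k')) by rewrite /t INRE RinvE; apply/RleP.
  have kpp : Rlt R0 (INR k') by apply: lt_0_INR; lia.
  have h2 : Rle (INR k') u.
    rewrite /u -[INR k']Rinv_inv; apply: Rinv_le_contravar => //.
  have : (Z.of_nat k' < z + 1)%Z.
    apply: lt_IZR; rewrite -INR_IZR_INZ plus_IZR; lra.
  lia.
Qed.


Lemma Rpower_Hmin (rho : 'M[C]_d) : density rho ->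
  Rpower 2 (Hmin rho) = Rinv (toR (lambda_max rho)).
Proof.
move=> Hr; have [_ [t1 _]] := t_facts Hr.
have dpos : Rlt R0 (INR d) by apply: lt_0_INR; lia.
have tpos : Rlt R0 (toR (lambda_max rho)).
  by apply: Rlt_le_trans t1; apply: Rinv_0_lt_compat.
rewrite /Rpower /Hmin /log2 /Rdiv.
have l2 := ln2_pos.
rewrite -Ropp_mult_distr_l Rmult_assoc Rinv_l; last by apply: Rgt_not_eq.
by rewrite Rmult_1_r exp_Ropp exp_ln.
Qed.

Variable V : 'M[C]_d -> Prop.
Hypothesis HV : specification V.

Definition fR (rho : 'M[C]_d) :=
  log2 (Rdiv (INR d) (Rfloor (Rinv (toR (lambda_max rho))))).

Lemma dk_pos k : (0 < k)%nat -> Rlt R0 (Rdiv (INR d) (INR k)).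
Proof.
move=> k0; apply: Rdiv_lt_0_compat; apply: lt_0_INR; lia.
Qed.

Lemma LA c : convertible (currency_set c) V -> exists rho, V rho /\ Rle (fR rho) (Val c).
Proof.
move=> [E [HE HEV]].
have main : forall k : nat, (0 < k)%nat -> (k <= d)%nat ->
    V (E (k%:R^-1 *: Pi C d k)) ->
    exists rho, V rho /\ Rle (fR rho) (log2 (Rdiv (INR d) (INR k))).
  move=> k k0 kd Vr; have [Hden Hle] := partA Hd HE k0 kd.
  exists (E (k%:R^-1 *: Pi C d k)); split => //.
  have [k' [k'0 k'd Fk _ kmax]] := floor_char Hden.
  have kk' := kmax _ k0 Hle.
  rewrite /fR Fk; apply: log2_le; first exact: dk_pos.
  rewrite /Rdiv; apply: Rmult_le_compat_l; first exact: pos_INR.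
  apply: Rinv_le_contravar; first by apply: lt_0_INR; lia.
  by apply: le_INR; lia.
case: c HEV => [i|] HEV.
  have k0 : (0 < i.+1)%nat by [].
  have kd : (i.+1 <= d)%nat by apply: ltn_ord.
  have [rho [Vr Hr]] := main _ k0 kd (HEV _ erefl).
  exists rho; split => //; rewrite /Val -log2_div;
    [exact: Hr | apply: lt_0_INR; lia | apply: lt_0_INR; lia].
have [rho [Vr Hr]] := main _ Hd (leqnn d) (HEV _ (@density_Pi C d d Hd (leqnn d))).
exists rho; split => //; rewrite /Val.
have dpos : Rlt R0 (INR d) by apply: lt_0_INR; lia.
move: Hr; rewrite /Rdiv Rinv_r; last by apply: Rgt_not_eq.
by rewrite /log2 ln_1 /Rdiv Rmult_0_l.
Qed.

Lemma LB rho : V rho -> exists c, convertible (currency_set c) V /\ fR rho = Val c.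
Proof.
move=> Vr; have Hden := HV.1 rho Vr.
have [k [k0 kd Fk Hle _]] := floor_char Hden.
have [E [HE HEk]] := partB Hd Hden k0 kd Hle.
case: k k0 kd Fk Hle HEk => [//|k] k0 kd Fk Hle HEk.
exists (Some (Ordinal kd)); split.
  by exists E; split => // rho' /= ->; rewrite HEk.
rewrite /fR Fk /Val log2_div //; apply: lt_0_INR; lia.
Qed.

Lemma fR_ge0 rho : V rho -> Rle R0 (fR rho).
Proof.
move=> Vr; have Hden := HV.1 rho Vr.
have [k [k0 kd Fk _ _]] := floor_char Hden.
have kpos : Rlt R0 (INR k) by apply: lt_0_INR; lia.
have : Rle (log2 (IZR 1)) (fR rho).
  rewrite /fR Fk; apply: log2_le; first lra.
  apply: (Rmult_le_reg_r (INR k)) => //.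
  rewrite /Rdiv Rmult_assoc Rinv_l; last by apply: Rgt_not_eq.
  by rewrite Rmult_1_r Rmult_1_l; apply: le_INR; lia.
by rewrite /log2 ln_1 /Rdiv Rmult_0_l.
Qed.

Lemma fR_split rho : V rho ->
  fR rho = Rminus (log2 (INR d)) (log2 (Rfloor (Rpower 2 (Hmin rho)))).
Proof.
move=> Vr; have Hden := HV.1 rho Vr.
have [k [k0 kd Fk _ _]] := floor_char Hden.
rewrite Rpower_Hmin // /fR Fk log2_div //; apply: lt_0_INR; lia.
Qed.

End Final.

Lemma glb_ex (S : R -> Prop) : (exists x, S x) -> (exists b, forall x, S x -> Rle b x) ->
  exists m, is_glb S m.
Proof.
move=> [x Sx] [b Hb].
pose E r := S (Ropp r).
have bnd : bound E.
  exists (Ropp b) => r Er; have := Hb _ Er; lra.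
have ne : exists r, E r by exists (Ropp x); rewrite /E Ropp_involutive.
have [m [Hm1 Hm2]] := completeness E bnd ne.
exists (Ropp m); split.
  move=> y Sy; have : Rle (Ropp y) m by apply: Hm1; rewrite /E Ropp_involutive.
  lra.
move=> b' Hb'; have : Rle m (Ropp b').
  apply: Hm2 => r Er; have := Hb' _ Er; lra.
lra.
Qed.

Lemma Rinf_eq (S : R -> Prop) m : is_glb S m -> Rinf S = m.
Proof.
move=> Hm; have H : is_glb S (Rinf S).
  exact: (epsilon_spec (inhabits R0) (is_glb S) (ex_intro _ m Hm)).
apply: Rle_antisym; first exact: Hm.2 _ H.1.
exact: H.2 _ Hm.1.
Qed.

Lemma Rsup_eq (S : R -> Prop) m : is_lub S m -> Rsup S = m.
Proof.
move=> Hm; have H : is_lub S (Rsup S).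
  exact: (epsilon_spec (inhabits R0) (is_lub S) (ex_intro _ m Hm)).
apply: Rle_antisym; first exact: H.2 _ Hm.1.
exact: Hm.2 _ H.1.
Qed.

Theorem mainTheorem12 (C : archiClosedFieldType) (d : nat) (Hd : (0 < d)%N)
  (V : 'M[C]_d -> Prop) (HV : specification V) :
  Cost V =
    Rinf (fun r => exists rho, V rho /\
            r = log2 (Rdiv (INR d) (Rfloor (Rinv (toR (lambda_max rho)))))) /\
  Cost V =
    Rminus (log2 (INR d))
      (Rsup (fun r => exists rho, V rho /\
            r = log2 (Rfloor (Rpower 2 (Hmin rho))))).
Proof.
have [m Hm] : exists m, is_glb (fun r => exists rho, V rho /\ r = fR rho) m.
  apply: glb_ex.
    by have [rho Vr] := HV.2; exists (fR rho), rho.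
  by exists R0 => x [rho [Vr ->]]; exact: (fR_ge0 Hd HV Vr).
have H1 : is_glb (fun r => exists c : option 'I_d, convertible (currency_set c) V /\ r = Val c) m.
  split.
    move=> x [c [Hc ->]]; have [rho [Vr Hr]] := LA Hd Hc.
    apply: Rle_trans Hr; apply: Hm.1; by exists rho.
  move=> b Hb; apply: Hm.2 => x [rho [Vr ->]].
  have [c [Hc e]] := LB Hd HV Vr; rewrite e; apply: Hb; by exists c.
have e1 : Cost V = m := Rinf_eq H1.
split.
  by rewrite e1; symmetry; apply: Rinf_eq; exact: Hm.
rewrite e1.
have H3 : is_lub (fun r => exists rho, V rho /\ r = log2 (Rfloor (Rpower 2 (Hmin rho))))
   (Rminus (log2 (INR d)) m).
  split.
    move=> x [rho [Vr ->]]; have := Hm.1 (fR rho) (ex_intro _ rho (conj Vr erefl)).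
    rewrite (fR_split Hd HV Vr); lra.
  move=> b Hb.
  have : Rle (Rminus (log2 (INR d)) b) m.
    apply: Hm.2 => x [rho [Vr ->]]; rewrite (fR_split Hd HV Vr).
    have := Hb _ (ex_intro _ rho (conj Vr erefl)); lra.
  lra.
rewrite (Rsup_eq H3); lra.
Qed.
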